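(* Let $K$ be a non-archimedean local field. A non-elementary subgroup $G$ of $\mathrm{SL}_2(K)$ is discrete if and only if every subgroup of $G$ generated by two elements is discrete.
   Context: A non-archimedean local field is a finite extension of $\mathbb{Q}_p$ or $\mathbb{F}_q((t))$. $\mathrm{SL}_2(K)$ has the subspace topology from $K^4$ and acts by isometries on its Bruhat–Tits tree $T_K$. A subgroup is elementary if it stabilises a vertex, an end, or a pair of ends of $T_K$, and non-elementary otherwise. *)

(* Defs.v *)
From mathcomp Require Import all_boot all_order all_algebra.
From mathcomp Require Import reals.
Set Implicit Arguments. Unset Strict Implicit. Unset Printing Implicit Defensive.
Import Order.TTheory GRing.Theory Num.Theory.
Local Open Scope ring_scope.

Section LocalField.
Variables (R : realType) (K : fieldType) (nu : K -> R).

Definition ultrametric_abs : Prop :=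
  [/\ forall x, 0 <= nu x,
      forall x, nu x = 0 <-> x = 0,
      forall x y, nu (x * y) = nu x * nu y &
      forall x y, nu (x + y) <= Num.max (nu x) (nu y)].

Definition uniformizer (p : K) : Prop :=
  0 < nu p < 1 /\ forall x, nu x < 1 -> nu x <= nu p.

Definition discrete_abs : Prop :=
  exists p, uniformizer p /\ forall x, x != 0 -> exists n : int, nu x = nu p ^ n.

Definition cauchy_seq (u : nat -> K) : Prop :=
  forall e : R, 0 < e -> exists N, forall m n, (N <= m)%N -> (N <= n)%N ->
    nu (u m - u n) < e.

Definition converges_to (u : nat -> K) (l : K) : Prop :=
  forall e : R, 0 < e -> exists N, forall n, (N <= n)%N -> nu (u n - l) < e.

Definition complete_abs : Prop :=
  forall u, cauchy_seq u -> exists l, converges_to u l.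

(** The residue field O / m is finite: finitely many residues of integers. *)
Definition finite_residue_field : Prop :=
  exists s : seq K, (forall a, a \in s -> nu a <= 1) /\
    forall x, nu x <= 1 -> exists2 a, a \in s & nu (x - a) < 1.

Definition nonarch_local_field : Prop :=
  [/\ ultrametric_abs, discrete_abs, complete_abs & finite_residue_field].

Definition mat := 'M[K]_2.
Definition vec := 'cV[K]_2.

Definition is_subgroup_SL2 (G : mat -> Prop) : Prop :=
  [/\ forall g, G g -> \det g = 1,
      G 1%:M,
      forall g h, G g -> G h -> G (g *m h) &
      forall g, G g -> G (invmx g)].

Definition gen2 (a b : mat) : mat -> Prop :=
  fun x => forall H, is_subgroup_SL2 H -> H a -> H b -> H x.

(** Discreteness for the subspace topology induced from K^4. *)
Definition discrete_subgroup (G : mat -> Prop) : Prop :=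
  forall g, G g -> exists2 e : R, 0 < e &
    forall h, G h -> (forall i j, nu (h i j - g i j) < e) -> h = g.

Definition lattice (g : mat) : vec -> Prop :=
  fun v => exists u : vec, (forall i, nu (u i 0) <= 1) /\ v = g *m u.

Definition scale_set (c : K) (L : vec -> Prop) : vec -> Prop :=
  fun v => exists w, L w /\ v = c *: w.

Definition subset_set (L L' : vec -> Prop) : Prop := forall v, L v -> L' v.
Definition psubset_set (L L' : vec -> Prop) : Prop :=
  subset_set L L' /\ exists v, L' v /\ ~ L v.

(** vertices of T_K: invertible matrices up to homothety of their lattices *)
Definition vertex (g : mat) : Prop := g \in unitmx.

Definition same_vertex (g h : mat) : Prop :=
  exists2 c : K, c != 0 & forall v, lattice h v <-> scale_set c (lattice g) v.

Definition adjacent (g h : mat) : Prop :=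
  exists p c, [/\ uniformizer p, c != 0,
    psubset_set (scale_set p (lattice g)) (scale_set c (lattice h)) &
    psubset_set (scale_set c (lattice h)) (lattice g)].

Definition ray (r : nat -> mat) : Prop :=
  forall n, [/\ vertex (r n), adjacent (r n) (r n.+1) & ~ same_vertex (r n) (r n.+2)].

Definition same_end (r r' : nat -> mat) : Prop :=
  exists k m, forall n, same_vertex (r (n + k)%N) (r' (n + m)%N).

Definition act_ray (a : mat) (r : nat -> mat) : nat -> mat := fun n => a *m r n.

Definition stabilises_vertex (G : mat -> Prop) : Prop :=
  exists2 h, vertex h & forall a, G a -> same_vertex (a *m h) h.

Definition stabilises_end (G : mat -> Prop) : Prop :=
  exists2 r, ray r & forall a, G a -> same_end (act_ray a r) r.

Definition stabilises_pair_of_ends (G : mat -> Prop) : Prop :=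
  exists r1 r2, [/\ ray r1, ray r2, ~ same_end r1 r2 &
    forall a, G a ->
      (same_end (act_ray a r1) r1 /\ same_end (act_ray a r2) r2) \/
      (same_end (act_ray a r1) r2 /\ same_end (act_ray a r2) r1)].

Definition elementary (G : mat -> Prop) : Prop :=
  stabilises_vertex G \/ stabilises_end G \/ stabilises_pair_of_ends G.

End LocalField.

(* Main.v *)
Require Import Defs.
From mathcomp Require Import all_boot all_order all_algebra.
From mathcomp Require Import reals.
From mathcomp Require Import ring lra zify.
From Stdlib Require Import Classical.
Set Implicit Arguments. Unset Strict Implicit. Unset Printing Implicit Defensive.
Import Order.TTheory GRing.Theory Num.Theory.
Local Open Scope ring_scope.

Lemma ord2P (i : 'I_2) : i = 0 \/ i = 1.
Proof. case: i => [[|[|m]]] Hi; [left|right|]; try by apply/val_inj. by []. Qed.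

Section Alg.
Variable K : fieldType.
Implicit Types A B X Y : 'M[K]_2.

Lemma mx2P A B : A 0 0 = B 0 0 -> A 0 1 = B 0 1 -> A 1 0 = B 1 0 -> A 1 1 = B 1 1 -> A = B.
Proof.
move=> h1 h2 h3 h4; apply/matrixP => i j.
by case: (ord2P i) => ->; case: (ord2P j) => ->.
Qed.

Lemma mul2E A B i j : (A *m B) i j = A i 0 * B 0 j + A i 1 * B 1 j.
Proof.
rewrite mxE big_ord_recl big_ord1; congr (_ + A i _ * B _ j); exact/val_inj. Qed.

Lemma det2 A : \det A = A 0 0 * A 1 1 - A 0 1 * A 1 0.
Proof.
rewrite (expand_det_row _ 0) big_ord_recl big_ord1 /cofactor !det_mx11 !mxE /=.
rewrite expr0 expr1 mul1r mulN1r mulrN; congr (A _ _ * A _ _ - A _ _ * A _ _); exact/val_inj.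
Qed.

Lemma tr2 A : \tr A = A 0 0 + A 1 1.
Proof. rewrite /mxtrace big_ord_recl big_ord1; congr (_ + A _ _); exact/val_inj. Qed.

Lemma CH2 A : A *m A = \tr A *: A - (\det A)%:M.
Proof.
rewrite tr2 det2; apply: mx2P; rewrite mul2E !mxE /=; ring.
Qed.

Lemma sq0_trdet A : A *m A = 0 -> \tr A = 0 /\ \det A = 0.
Proof.
move=> H.
have e i j : (A *m A) i j = 0 by rewrite H mxE.
move: (e 0 0) (e 0 1) (e 1 0) (e 1 1); rewrite !mul2E tr2 det2.
set a := A 0 0; set b := A 0 1; set c := A 1 0; set d := A 1 1.
move=> h1 h2 h3 h4.
have ad : a + d = 0.
  apply/eqP; apply/negP => /negP nz.
  have hb : b = 0.
    have : b * (a + d) = 0 by rewrite -h2; ring.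
    by move/eqP; rewrite mulf_eq0 (negbTE nz) orbF => /eqP.
  have hc : c = 0.
    have : c * (a + d) = 0 by rewrite -h3; ring.
    by move/eqP; rewrite mulf_eq0 (negbTE nz) orbF => /eqP.
  have ha : a * a = 0 by rewrite -h1 hb; ring.
  have hd : d * d = 0 by rewrite -h4 hc; ring.
  move/eqP: ha; rewrite mulf_eq0 orbb => /eqP ha.
  move/eqP: hd; rewrite mulf_eq0 orbb => /eqP hd.
  by move: nz; rewrite ha hd addr0 eqxx.
split => //.
have hd : d = - a by apply/eqP; rewrite -subr_eq0 opprK addrC ad.
rewrite hd; have -> : a * - a - b * c = - (a * a + b * c) by ring.
by rewrite h1 oppr0.
Qed.

Lemma det_exp A n : \det (A ^+ n) = \det A ^+ n.
Proof.
elim: n => [|n IH]; first by rewrite !expr0 det1.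
by rewrite exprSr -mulmxE det_mulmx IH exprSr.
Qed.

Lemma nilp2 A n : (0 < n)%N -> A ^+ n = 0 -> A *m A = 0.
Proof.
move=> n0 H.
have d0 : \det A = 0.
  have : \det A ^+ n = 0 by rewrite -det_exp H det0.
  by move/eqP; rewrite expf_eq0 n0 /= => /eqP.
have AA : A *m A = \tr A *: A by rewrite CH2 d0 raddf0 subr0.
have P k : A ^+ k.+1 = \tr A ^+ k *: A.
  elim: k => [|k IH]; first by rewrite expr1 expr0 scale1r.
  by rewrite exprSr IH -mulmxE -scalemxAl AA scalerA -exprSr.
move: H; case: n n0 => // n _; rewrite P => /eqP; rewrite scaler_eq0 => /orP [|/eqP ->].
  by rewrite expf_eq0 => /andP [_ /eqP t0]; rewrite AA t0 scale0r.
by rewrite mulmx0.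
Qed.

Lemma keyN X Y : X *m X = 0 -> Y *m Y = 0 -> \tr (X *m Y) = 0 -> Y *m X = 0.
Proof.
move=> HX HY HT.
have [tX dX] := sq0_trdet HX; have [tY dY] := sq0_trdet HY.
move: tX dX tY dY HT; rewrite !tr2 !det2 !mul2E.
set a := X 0 0; set b := X 0 1; set c := X 1 0; set d := X 1 1.
set a' := Y 0 0; set b' := Y 0 1; set c' := Y 1 0; set d' := Y 1 1.
move=> tX dX tY dY T.
have hd : d = - a by apply/eqP; rewrite -subr_eq0 opprK addrC tX.
have hd' : d' = - a' by apply/eqP; rewrite -subr_eq0 opprK addrC tY.
rewrite hd in dX T; rewrite hd' in dY T.
have T' : a * a' + b * c' + (a' * a + b' * c) = 0 by rewrite -T; ring.
have dX' : a * - a - b * c = 0 by rewrite -dX; ring.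
have dY' : a' * - a' - b' * c' = 0 by rewrite -dY; ring.
have sq (x : K) : x * x = 0 -> x = 0 by move/eqP; rewrite mulf_eq0 orbb => /eqP.
apply: mx2P; rewrite mul2E !mxE -/a -/b -/c -/d -/a' -/b' -/c' -/d' ?hd ?hd'; apply: sq.
- have -> : (a' * a + b' * c) * (a' * a + b' * c) =
    b' * c * (a * a' + b * c' + (a' * a + b' * c)) - a' * a' * (a * - a - b * c)
    + b * c * (a' * - a' - b' * c') by ring.
  by rewrite T' dX' dY'; ring.
- have -> : (a' * b + b' * - a) * (a' * b + b' * - a) =
    - b * b' * (a * a' + b * c' + (a' * a + b' * c))
    - b * b * (a' * - a' - b' * c') - b' * b' * (a * - a - b * c) by ring.
  by rewrite T' dX' dY'; ring.
- have -> : (c' * a + - a' * c) * (c' * a + - a' * c) =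
    - c * c' * (a * a' + b * c' + (a' * a + b' * c))
    - c * c * (a' * - a' - b' * c') - c' * c' * (a * - a - b * c) by ring.
  by rewrite T' dX' dY'; ring.
- have -> : (c' * b + - a' * - a) * (c' * b + - a' * - a) =
    b * c' * (a * a' + b * c' + (a' * a + b' * c))
    - a' * a' * (a * - a - b * c) + b * c * (a' * - a' - b' * c') by ring.
  by rewrite T' dX' dY'; ring.
Qed.

Lemma mulv2E (A : 'M[K]_2) (u : 'cV[K]_2) i : (A *m u) i 0 = A i 0 * u 0 0 + A i 1 * u 1 0.
Proof. rewrite mxE big_ord_recl big_ord1; congr (_ + A i _ * u _ 0); exact/val_inj. Qed.

Lemma cv2P (u v : 'cV[K]_2) : u 0 0 = v 0 0 -> u 1 0 = v 1 0 -> u = v.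
Proof.
move=> h1 h2; apply/matrixP => i j; have -> : j = 0 by apply/val_inj; case: j => [[]].
by case: (ord2P i) => ->.
Qed.

Lemma ker1 (Y : 'M[K]_2) (u v : 'cV[K]_2) : Y != 0 -> u != 0 ->
  Y *m u = 0 -> Y *m v = 0 -> exists l, v = l *: u.
Proof.
move=> Yn un Yu Yv.
have eu i : Y i 0 * u 0 0 + Y i 1 * u 1 0 = 0 by rewrite -mulv2E Yu mxE.
have ev i : Y i 0 * v 0 0 + Y i 1 * v 1 0 = 0 by rewrite -mulv2E Yv mxE.
set D := u 0 0 * v 1 0 - u 1 0 * v 0 0.
have D0 : D = 0.
  apply: NNPP => Dn'; have Dn : D != 0 by apply/eqP.
  apply: (negP Yn); apply/eqP.
  apply/matrixP => i j; rewrite mxE.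
  case: (ord2P j) => ->.
  - have : Y i 0 * D = v 1 0 * (Y i 0 * u 0 0 + Y i 1 * u 1 0) - u 1 0 * (Y i 0 * v 0 0 + Y i 1 * v 1 0) by rewrite /D; ring.
    rewrite eu ev !mulr0 subrr.
    by move/eqP; rewrite mulf_eq0 (negbTE Dn) orbF => /eqP.
  - have : Y i 1 * D = u 0 0 * (Y i 0 * v 0 0 + Y i 1 * v 1 0) - v 0 0 * (Y i 0 * u 0 0 + Y i 1 * u 1 0) by rewrite /D; ring.
    rewrite eu ev !mulr0 subrr.
    by move/eqP; rewrite mulf_eq0 (negbTE Dn) orbF => /eqP.
have [u0|u0] := eqVneq (u 0 0) 0.
  have u1 : u 1 0 != 0.
    apply/negP => /eqP u1; apply: (negP un); apply/eqP.
    by apply: cv2P; rewrite mxE.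
  have v0 : v 0 0 = 0.
    move: D0; rewrite /D u0 mul0r sub0r => /eqP; rewrite oppr_eq0 mulf_eq0 (negbTE u1) /=.
    by move/eqP.
  exists (v 1 0 / u 1 0); apply: cv2P; rewrite mxE ?u0 ?v0 ?mulr0 //.
  by rewrite mulfVK.
exists (v 0 0 / u 0 0); apply: cv2P; rewrite mxE ?mulfVK //.
apply: (mulfI u0).
have : u 0 0 * v 1 0 = u 1 0 * v 0 0 by apply/eqP; rewrite -subr_eq0 -/D D0.
move=> ->; by rewrite mulrA [u 0 0 * (_ / _)]mulrC mulfVK // mulrC.
Qed.
End Alg.

Lemma geom_small (R : realType) (q e : R) : 0 <= q -> q < 1 -> 0 < e ->
  exists N : nat, q ^+ N < e.
Proof.
move=> q0 q1 e0.
have [->|qn0] := eqVneq q 0; first by exists 1%N; rewrite expr1.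
have qp : 0 < q by rewrite lt_neqAle eq_sym qn0 q0.
set x := q^-1 - 1.
have xp : 0 < x by rewrite /x subr_gt0 invf_gt1.
have bern N : 1 + N%:R * x <= (1 + x) ^+ N.
  elim: N => [|N IH]; first by rewrite mul0r addr0 expr0.
  rewrite exprS; apply: le_trans (_ : (1 + x) * (1 + N%:R * x) <= _).
    have h0 : 0 <= N%:R * x * x by rewrite !mulr_ge0 // ltW.
    have -> : (1 + x) * (1 + N%:R * x) = 1 + (N%:R + 1) * x + N%:R * x * x by ring.
    rewrite -natr1; lra.
  by rewrite ler_wpM2l // addr_ge0 // ltW.
have ex0 : 0 <= (e * x)^-1 by rewrite invr_ge0 ltW // mulr_gt0.
have hb := archi_boundP ex0.
set N := Num.Def.archi_bound _ in hb.
exists N.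
have qE : q = (1 + x)^-1 by rewrite /x addrC subrK invrK.
have Np : 0 < (1 + x) ^+ N by rewrite exprn_gt0 // ltr_wpDr // ltW.
have Bp : 0 < 1 + N%:R * x by rewrite ltr_wpDr // mulr_ge0 // ltW.
rewrite qE exprVn; apply: (@le_lt_trans _ _ (1 + N%:R * x)^-1).
  by rewrite lef_pV2 ?posrE // bern.
rewrite -[e]invrK ltf_pV2 ?posrE ?invr_gt0 //.
apply: lt_le_trans (_ : N%:R * x <= _); last by rewrite lerDr.
move: hb; rewrite invfM => hb.
rewrite -(ltr_pM2r xp) in hb.
apply: le_lt_trans hb; rewrite -mulrA mulVf ?mulr1 //; exact: lt0r_neq0.
Qed.

Section Grp.
Variable K : fieldType.
Lemma gen2_pow (a : 'M[K]_2) k : gen2 a a (a ^+ k).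
Proof.
move=> H [_ H1 HM _] Ha _; elim: k => [|k IH]; first by rewrite expr0.
by rewrite exprSr -mulmxE; apply: HM.
Qed.
Lemma gen2_sub (G : 'M[K]_2 -> Prop) a b : is_subgroup_SL2 G -> G a -> G b ->
  forall x, gen2 a b x -> G x.
Proof. by move=> HG Ha Hb x Hx; apply: Hx. Qed.
End Grp.

Section S.
Variables (R : realType) (K : fieldType) (nu : K -> R).
Hypothesis Hu : ultrametric_abs nu.

Lemma nu_ge0 x : 0 <= nu x. Proof. by case: Hu. Qed.
Lemma nu_eq0 x : nu x = 0 <-> x = 0. Proof. by case: Hu. Qed.
Lemma nuM x y : nu (x * y) = nu x * nu y. Proof. by case: Hu. Qed.
Lemma nuD x y : nu (x + y) <= Num.max (nu x) (nu y). Proof. by case: Hu. Qed.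
Lemma nu0 : nu 0 = 0. Proof. by apply/nu_eq0. Qed.
Lemma nu1 : nu 1 = 1.
Proof.
have h : nu 1 = nu 1 * nu 1 by rewrite -nuM mulr1.
have n0 : nu 1 != 0 by apply/eqP => /nu_eq0 /eqP; rewrite oner_eq0.
by apply: (mulfI n0); rewrite -h mulr1.
Qed.
Lemma nuN1 : nu (-1) = 1.
Proof.
have h : nu (-1) * nu (-1) = 1 by rewrite -nuM mulrNN mulr1 nu1.
have h0 := nu_ge0 (-1).
have : (nu (-1) - 1) * (nu (-1) + 1) = 0 by rewrite mulrBl !mulrDr h; ring.
move/eqP; rewrite mulf_eq0 => /orP [/eqP|/eqP] H; first by apply/eqP; rewrite -subr_eq0 H.
have : nu (-1) = -1 by apply/eqP; rewrite -subr_eq0 opprK H.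
move=> E; move: h0; rewrite E; lra.
Qed.
Lemma nuN x : nu (- x) = nu x. Proof. by rewrite -mulN1r nuM nuN1 mul1r. Qed.
Lemma nuB x y : nu (x - y) = nu (y - x). Proof. by rewrite -nuN opprB. Qed.
Lemma nuD_le x y r : nu x <= r -> nu y <= r -> nu (x + y) <= r.
Proof. move=> a b; apply: le_trans (nuD x y) _; by rewrite ge_max a b. Qed.
Lemma nuD_lt x y r : nu x < r -> nu y < r -> nu (x + y) < r.
Proof. move=> a b; apply: le_lt_trans (nuD x y) _; by rewrite gt_max a b. Qed.
Lemma nu_sum (I : finType) (F : I -> K) r : 0 <= r -> (forall i, nu (F i) <= r) ->
  nu (\sum_i F i) <= r.
Proof.
move=> r0 H; elim/big_ind: _ => //; first by rewrite nu0.
by move=> x y; apply: nuD_le.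
Qed.
Lemma nu_natr n : nu n%:R <= 1.
Proof.
elim: n => [|n IH]; first by rewrite nu0 ler01.
by rewrite -addn1 natrD; apply: nuD_le => //; rewrite nu1.
Qed.
Lemma nuD_dom x y : nu y < nu x -> nu (x + y) = nu x.
Proof.
move=> H; apply/le_anti/andP; split.
  by apply: le_trans (nuD x y) _; rewrite ge_max lexx ltW.
have : nu x <= Num.max (nu (x + y)) (nu (- y)) by rewrite -[x in nu x](addrK y) nuD.
rewrite nuN le_max => /orP [//|]; by rewrite leNgt H.
Qed.
Lemma nuV x : x != 0 -> nu x^-1 = (nu x)^-1.
Proof.
move=> x0; have h : nu x * nu x^-1 = 1 by rewrite -nuM mulfV // nu1.
have nx : nu x != 0 by apply/eqP => /nu_eq0 /eqP; rewrite (negbTE x0).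
by rewrite -[RHS]mulr1 -h mulrA mulVf // mul1r.
Qed.

Definition mnorm (A : 'M[K]_2) : R :=
  Num.max (Num.max (nu (A 0 0)) (nu (A 0 1))) (Num.max (nu (A 1 0)) (nu (A 1 1))).

Lemma mnorm_ge (A : 'M[K]_2) i j : nu (A i j) <= mnorm A.
Proof.
rewrite /mnorm; case: (ord2P i) => ->; case: (ord2P j) => ->;
  by rewrite !le_max lexx ?orbT.
Qed.
Lemma mnorm_le (A : 'M[K]_2) r : (forall i j, nu (A i j) <= r) -> mnorm A <= r.
Proof. by move=> H; rewrite /mnorm !ge_max !H. Qed.
Lemma mnorm_lt (A : 'M[K]_2) r : (forall i j, nu (A i j) < r) -> mnorm A < r.
Proof. by move=> H; rewrite /mnorm !gt_max !H. Qed.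
Lemma mnorm_ltP (A : 'M[K]_2) r : mnorm A < r -> forall i j, nu (A i j) < r.
Proof. by move=> H i j; apply: le_lt_trans (mnorm_ge A i j) H. Qed.
Lemma mnorm_ge0 (A : 'M[K]_2) : 0 <= mnorm A.
Proof. exact: le_trans (nu_ge0 _) (mnorm_ge A 0 0). Qed.
Lemma mnorm_attain (A : 'M[K]_2) : exists i j, nu (A i j) = mnorm A.
Proof.
rewrite /mnorm !maxEle; repeat case: ifP => _; by eexists; eexists.
Qed.
Lemma mnorm_eq0 (A : 'M[K]_2) : mnorm A = 0 -> A = 0.
Proof.
move=> H; apply/matrixP => i j; rewrite mxE; apply/nu_eq0.
by apply/le_anti; rewrite nu_ge0 -H mnorm_ge.
Qed.
Lemma mnorm0 : mnorm (0 : 'M[K]_2) = 0.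
Proof. by apply/le_anti; rewrite mnorm_ge0 andbT; apply: mnorm_le => i j; rewrite mxE nu0. Qed.
Lemma mnormD (A B : 'M[K]_2) : mnorm (A + B) <= Num.max (mnorm A) (mnorm B).
Proof.
apply: mnorm_le => i j; rewrite mxE; apply: nuD_le; rewrite le_max mnorm_ge ?orbT //.
Qed.
Lemma mnormD_le (A B : 'M[K]_2) r : mnorm A <= r -> mnorm B <= r -> mnorm (A + B) <= r.
Proof. by move=> a b; apply: le_trans (mnormD A B) _; rewrite ge_max a b. Qed.
Lemma mnormD_lt (A B : 'M[K]_2) r : mnorm A < r -> mnorm B < r -> mnorm (A + B) < r.
Proof. by move=> a b; apply: le_lt_trans (mnormD A B) _; rewrite gt_max a b. Qed.
Lemma mnormN (A : 'M[K]_2) : mnorm (- A) = mnorm A.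
Proof. by rewrite /mnorm !mxE !nuN. Qed.
Lemma mnormM (A B : 'M[K]_2) : mnorm (A *m B) <= mnorm A * mnorm B.
Proof.
apply: mnorm_le => i j; rewrite mxE; apply: nu_sum.
  by rewrite mulr_ge0 // mnorm_ge0.
by move=> k; rewrite nuM ler_pM ?nu_ge0 ?mnorm_ge.
Qed.
Lemma mnormZ c (A : 'M[K]_2) : mnorm (c *: A) = nu c * mnorm A.
Proof.
apply/le_anti/andP; split.
  apply: mnorm_le => i j; rewrite mxE nuM ler_wpM2l ?nu_ge0 ?mnorm_ge //.
have [i [j <-]] := mnorm_attain A.
by rewrite -nuM (_ : c * A i j = (c *: A) i j) ?mnorm_ge // mxE.
Qed.
Lemma mnorm_dom (A B : 'M[K]_2) : mnorm B < mnorm A -> mnorm (A + B) = mnorm A.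
Proof.
move=> H; apply/le_anti/andP; split.
  by apply: le_trans (mnormD A B) _; rewrite ge_max lexx ltW.
have [i [j E]] := mnorm_attain A.
rewrite -E -(nuD_dom (x := A i j) (y := B i j)); first by rewrite (_ : A i j + B i j = (A + B) i j) ?mnorm_ge // mxE.
by rewrite E; apply: le_lt_trans (mnorm_ge B i j) H.
Qed.
Lemma residue_char : finite_residue_field nu -> exists n, (0 < n)%N /\ nu n%:R < 1.
Proof.
case=> s [Hs1 Hs2].
pose P := fun k : nat => fun a : K => nu (k%:R - a) < 1.
have Hk k : has (P k) s.
  have [a ain Ha] := Hs2 (k%:R) (nu_natr k); by apply/hasP; exists a.
pose f := fun k => find (P k) s.
have fl k : (f k < size s)%N by rewrite /f -has_find.
apply: NNPP => Hno.
have inj : {in iota 0 (size s).+1 &, injective f}.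
  move=> i j _ _ E; apply/eqP; apply/negP => Hne.
  have Pi := nth_find 0 (Hk i); have Pj := nth_find 0 (Hk j).
  rewrite -/(f i) -/(f j) -E /P in Pi Pj.
  set a := nth 0 s (f i) in Pi Pj.
  have Hij : nu (i%:R - j%:R) < 1.
    have -> : i%:R - j%:R = (i%:R - a) + - (j%:R - a) by ring.
    by apply: nuD_lt; rewrite ?nuN.
  apply: Hno; case: (ltngtP i j) => Hc.
  - exists (j - i)%N; split; first by rewrite subn_gt0.
    by rewrite natrB ?(ltnW Hc) // nuB.
  - exists (i - j)%N; split; first by rewrite subn_gt0.
    by rewrite natrB ?(ltnW Hc).
  - by move: Hne; rewrite Hc eqxx.
have := map_inj_in_uniq inj; rewrite iota_uniq => U.
have : (size (map f (iota 0 (size s).+1)) <= size (iota 0 (size s)))%N.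
  apply: uniq_leq_size => // y /mapP [k _ ->]; by rewrite mem_iota add0n fl.
by rewrite size_map !size_iota ltnn.
Qed.

Lemma one_mx_eq : (1 : 'M[K]_2) = 1%:M. Proof. by []. Qed.

Lemma mnorm1 : mnorm (1%:M : 'M[K]_2) <= 1.
Proof.
apply: mnorm_le => i j; rewrite mxE; case: (i == j); by rewrite ?nu1 ?nu0 ?ler01.
Qed.
Lemma mnormX (A : 'M[K]_2) k : mnorm (A ^+ k) <= mnorm A ^+ k.
Proof.
elim: k => [|k IH]; first by rewrite !expr0 mnorm1.
rewrite exprSr -mulmxE exprSr; apply: le_trans (mnormM _ _) _.
by rewrite ler_wpM2r ?mnorm_ge0.
Qed.
Lemma mnormMn (A : 'M[K]_2) m : mnorm (A *+ m) <= mnorm A.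
Proof.
rewrite -scaler_nat mnormZ; apply: le_trans (_ : 1 * _ <= _); last by rewrite mul1r.
by rewrite ler_wpM2r ?mnorm_ge0 ?nu_natr.
Qed.
Lemma mnorm_sum (I : finType) (F : I -> 'M[K]_2) r : 0 <= r ->
  (forall i, mnorm (F i) <= r) -> mnorm (\sum_i F i) <= r.
Proof.
move=> r0 H; elim/big_ind: _ => //; first by rewrite mnorm0.
by move=> x y; apply: mnormD_le.
Qed.

Lemma case1_step (n : nat) (X : 'M[K]_2) : 0 < nu n%:R -> nu n%:R < 1 ->
  mnorm X < nu n%:R -> mnorm ((X + 1) ^+ n - 1) = nu n%:R * mnorm X.
Proof.
move=> n0 n1 Xn.
have [->|Xnz] := eqVneq X 0.
  by rewrite add0r expr1n subrr mnorm0 mulr0.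
have Xp : 0 < mnorm X.
  rewrite lt_neqAle mnorm_ge0 andbT eq_sym; apply/eqP => /mnorm_eq0 E.
  by move: Xnz; rewrite E eqxx.
case: n n0 n1 Xn => [|m] n0 n1 Xn; first by move: n0; rewrite nu0 ltxx.
rewrite exprD1n big_ord_recl big_ord_recl /= expr0 bin0 expr1 bin1.
rewrite (addrC 1) addrK.
set Rem := \sum_(i < m) _.
have hRem : mnorm Rem < nu m.+1%:R * mnorm X.
  apply: le_lt_trans (_ : mnorm Rem <= mnorm X ^+ 2) _.
    apply: mnorm_sum; first by rewrite exprn_ge0 ?mnorm_ge0.
    move=> i; apply: le_trans (mnormMn _ _) _; apply: le_trans (mnormX _ _) _.
    rewrite /bump /= !add1n exprSr.
    rewrite expr2 ler_wpM2r ?mnorm_ge0 //.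
    rewrite exprS -[X in _ <= X]mulr1 ler_wpM2l ?mnorm_ge0 // exprn_ile1 ?mnorm_ge0 //; apply: ltW; apply: lt_trans Xn n1.
  by rewrite expr2 ltr_pM2r.
by rewrite -scaler_nat mnorm_dom mnormZ // mnormZ.
Qed.

Lemma case1_iter (n : nat) (h : 'M[K]_2) : 0 < nu n%:R -> nu n%:R < 1 ->
  mnorm (h - 1) < nu n%:R ->
  forall k, mnorm (h ^+ (n ^ k) - 1) = nu n%:R ^+ k * mnorm (h - 1).
Proof.
move=> n0 n1 hn; elim => [|k IH]; first by rewrite expn0 expr1 expr0 mul1r.
rewrite expnSr exprM.
have -> : h ^+ (n ^ k) = (h ^+ (n ^ k) - 1) + 1 by rewrite subrK.
rewrite case1_step // ?IH ?exprSr; first by rewrite mulrA [_ * nu _]mulrC.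
apply: le_lt_trans hn.
apply: le_trans (_ : 1 * _ <= _); last by rewrite mul1r.
rewrite ler_wpM2r ?mnorm_ge0 // exprn_ile1 ?nu_ge0 // ltW //.
Qed.

Lemma disc_from1 (G : 'M[K]_2 -> Prop) : is_subgroup_SL2 G ->
  (exists2 e, 0 < e & forall h, G h -> mnorm (h - 1%:M) < e -> h = 1%:M) ->
  discrete_subgroup nu G.
Proof.
move=> [Hdet H1 HM HV] [e e0 He] g Gg.
have gu : g \in unitmx by rewrite unitmxE Hdet // unitr1.
set B := mnorm (invmx g) + 1.
have Bp : 0 < B by have := mnorm_ge0 (invmx g); rewrite /B; lra.
exists (e / B); first by rewrite divr_gt0.
move=> h Gh Hc.
have hg : mnorm (h - g) < e / B by apply: mnorm_lt => i j; rewrite !mxE; exact: Hc.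
have E : h *m invmx g - 1%:M = (h - g) *m invmx g by rewrite mulmxBl mulmxV.
have := He _ (HM _ _ Gh (HV _ Gg)); rewrite E => He'.
have E1 : h *m invmx g = 1%:M.
  apply: He'; apply: le_lt_trans (mnormM _ _) _.
  apply: le_lt_trans (_ : mnorm (h - g) * B < _).
    by rewrite ler_wpM2l ?mnorm_ge0 // /B lerDl ler01.
  by rewrite -(ltr_pM2r Bp) in hg; rewrite mulfVK ?lt0r_neq0 // in hg.
by rewrite -[h]mulmx1 -(mulVmx gu) mulmxA E1 mul1mx.
Qed.

Lemma disc_at1 (G : 'M[K]_2 -> Prop) : discrete_subgroup nu G -> G 1%:M ->
  exists2 e, 0 < e & forall h, G h -> mnorm (h - 1%:M) < e -> h = 1%:M.
Proof.
move=> HD G1; have [e e0 He] := HD _ G1; exists e => // h Gh Hh.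
apply: He => // i j; have := mnorm_ltP Hh i j; by rewrite !mxE.
Qed.

Lemma case1_disc (G : 'M[K]_2 -> Prop) (n : nat) : is_subgroup_SL2 G ->
  (forall a b, G a -> G b -> discrete_subgroup nu (gen2 a b)) ->
  0 < nu n%:R -> nu n%:R < 1 -> discrete_subgroup nu G.
Proof.
move=> HG H2 n0 n1; apply: disc_from1 => //; exists (nu n%:R) => // h Gh hn.
apply: NNPP => hne.
have rp : 0 < mnorm (h - 1%:M).
  rewrite lt_neqAle mnorm_ge0 andbT eq_sym; apply/eqP => /mnorm_eq0 /eqP.
  by rewrite subr_eq0 => /eqP.
have [e1 e0 He1] := disc_at1 (H2 h h Gh Gh) (gen2_pow (a:=h) 0).
have [k Hk] := geom_small (nu_ge0 n%:R) n1 (divr_gt0 e0 rp).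
have X := case1_iter n0 n1 hn k.
have E := He1 _ (gen2_pow (a:=h) (n ^ k)).
have : h ^+ (n ^ k) = 1%:M.
  apply: E; rewrite -one_mx_eq X.
  by rewrite -(ltr_pM2r rp) mulfVK ?lt0r_neq0 // in Hk.
move=> E1; move: X; rewrite E1 -one_mx_eq subrr mnorm0 => /esym/eqP.
rewrite mulf_eq0 expf_eq0 (negbTE (lt0r_neq0 n0)) andbF /= => /eqP E0; move: rp; by rewrite -one_mx_eq E0 ltxx.
Qed.
Section Char.
Variable p : nat.
Hypothesis hp : p \in [pchar K].

Lemma frob_iter (X : 'M[K]_2) k : (X + 1) ^+ (p ^ k) = X ^+ (p ^ k) + 1.
Proof.
have hpM := rmorph_pchar (@scalar_mx K 2) hp.
elim: k => [|k IH]; first by rewrite expn0 !expr1.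
rewrite expnSr !exprM IH.
have := pFrobenius_autD_comm hpM (commr1 (X ^+ (p ^ k))).
by rewrite pFrobenius_aut1 => E; exact: E.
Qed.

Variable G : 'M[K]_2 -> Prop.
Hypothesis HG : is_subgroup_SL2 G.
Hypothesis H2 : forall a b, G a -> G b -> discrete_subgroup nu (gen2 a b).

Lemma near1_sq h : G h -> mnorm (h - 1) < 1 -> (h - 1) *m (h - 1) = 0.
Proof.
move=> Gh hr.
have p1 : (1 < p)%N by apply: prime_gt1; apply: pcharf_prime hp.
set X := h - 1.
have [e1 e0 He1] := disc_at1 (H2 Gh Gh) (gen2_pow (a:=h) 0).
have [N HN] := geom_small (mnorm_ge0 X) hr e0.
have hE : h = X + 1 by rewrite /X subrK.
have E : h ^+ (p ^ N) = 1%:M.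
  apply: He1; first exact: gen2_pow.
  rewrite -one_mx_eq {1}hE frob_iter addrK.
  apply: le_lt_trans (mnormX _ _) _; apply: le_lt_trans HN.
  apply: ler_wiXn2l; rewrite ?mnorm_ge0 ?ltW //; exact: ltnW (ltn_expl _ p1).
apply: (@nilp2 _ _ (p ^ N)); first by rewrite expn_gt0 ltnW.
by move: E; rewrite -one_mx_eq {1}hE frob_iter => E; have := congr1 (fun M => M - 1) E; rewrite addrK subrr.
Qed.

Lemma near1_pair h1 h2 : G h1 -> G h2 -> mnorm (h1 - 1) < 1 -> mnorm (h2 - 1) < 1 ->
  (h2 - 1) *m (h1 - 1) = 0.
Proof.
move=> G1 G2 r1 r2; have [Hdet H1 HM HV] := HG.
have Z : h1 *m h2 - 1 = (h1 - 1) + (h2 - 1) + (h1 - 1) *m (h2 - 1).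
  by apply: mx2P; rewrite !(mul2E, mxE) /=; ring.
have G12 := HM _ _ G1 G2.
have r12 : mnorm (h1 *m h2 - 1) < 1.
  rewrite Z; apply: mnormD_lt; first exact: mnormD_lt.
  apply: le_lt_trans (mnormM _ _) _.
  apply: (@lt_le_trans _ _ (1 * 1)); last by rewrite mulr1.
  by apply: ltr_pM; rewrite ?mnorm_ge0.
have [tZ _] := sq0_trdet (near1_sq G12 r12).
have [t1 _] := sq0_trdet (near1_sq G1 r1).
have [t2 _] := sq0_trdet (near1_sq G2 r2).
apply: keyN; [exact: near1_sq|exact: near1_sq|].
by move: tZ; rewrite Z mxtraceD mxtraceD t1 t2 !add0r.
Qed.

Lemma fixline : ~ (exists2 e, 0 < e & forall h, G h -> mnorm (h - 1%:M) < e -> h = 1%:M) ->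
  exists2 u : 'cV[K]_2, u != 0 & forall a, G a -> exists l, a *m u = l *: u.
Proof.
move=> nd; have [Hdet H1 HM HV] := HG.
have small e : 0 < e -> exists h, [/\ G h, h - 1 != 0 & mnorm (h - 1) < e].
  move=> e0; apply: NNPP => hn; apply: nd; exists e => // h Gh he.
  apply: NNPP => hne; apply: hn; exists h; split => //.
  by rewrite subr_eq0; apply/eqP.
have [h0 [Gh0 h0n h0r]] := small 1 ltr01.
set X0 := h0 - 1 in h0n h0r.
have [j cj] : exists j, col j X0 != 0.
  case: (eqVneq (col 0 X0) 0) => c0; last by exists 0.
  exists 1; apply/negP => /eqP c1; apply: (negP h0n); apply/eqP.
  apply/matrixP => i k; rewrite mxE; case: (ord2P k) => ->.
  + by have := congr1 (fun M : 'cV[K]_2 => M i 0) c0; rewrite !mxE.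
  + by have := congr1 (fun M : 'cV[K]_2 => M i 0) c1; rewrite !mxE.
set u := col j X0 in cj.
have Yu h : G h -> mnorm (h - 1) < 1 -> (h - 1) *m u = 0.
  by move=> Gh hr; rewrite /u colE mulmxA near1_pair // mul0mx.
suff inv : forall a, G a -> exists l, invmx a *m u = l *: u.
  exists u => // a Ga; have := inv _ (HV _ Ga); by rewrite invmxK.
move=> a Ga.
have au : a \in unitmx by rewrite unitmxE Hdet // unitr1.
set C := mnorm a * mnorm (invmx a) + 1.
have Cp : 0 < C.
  have := mulr_ge0 (mnorm_ge0 a) (mnorm_ge0 (invmx a)); rewrite /C; lra.
have Ci : 0 < C^-1 by rewrite invr_gt0.
have [h [Gh hn hr]] := small (C^-1) Ci.
have hr1 : mnorm (h - 1) < 1.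
  apply: lt_le_trans hr _; rewrite invf_le1 // /C lerDr mulr_ge0 ?mnorm_ge0 //.
set Y := h - 1 in hn hr hr1.
have GW := HM _ _ (HM _ _ Ga Gh) (HV _ Ga).
have WE : a *m h *m invmx a - 1 = a *m Y *m invmx a.
  by rewrite /Y mulmxBr mulmxBl mulmx1 mulmxV.
have Wr : mnorm (a *m h *m invmx a - 1) < 1.
  rewrite WE; apply: le_lt_trans (mnormM _ _) _.
  apply: (@le_lt_trans _ _ (mnorm Y * C)).
    apply: (@le_trans _ _ (mnorm a * mnorm Y * mnorm (invmx a))).
      by rewrite ler_wpM2r ?mnorm_ge0 ?mnormM.
    have := mnorm_ge0 Y; have := mnorm_ge0 a; have := mnorm_ge0 (invmx a).
    rewrite /C; nra.
  by rewrite -(ltr_pM2r Cp) mulVf ?lt0r_neq0 // in hr.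
have Wu := Yu _ GW Wr; rewrite WE in Wu.
have YAu : Y *m (invmx a *m u) = 0.
  have := congr1 (mulmx (invmx a)) Wu.
  by rewrite mulmx0 !mulmxA mulVmx // mul1mx.
exact: ker1 hn cj (Yu _ Gh hr1) YAu.
Qed.
End Char.

Definition mk2 (a b c d : K) : 'M[K]_2 :=
  \matrix_(i, j) if i == 0 then (if j == 0 then a else b) else (if j == 0 then c else d).
Definition cv2 (a b : K) : 'cV[K]_2 := \matrix_(i, j) if i == 0 then a else b.
Lemma mk2E00 a b c d : mk2 a b c d 0 0 = a. Proof. by rewrite !mxE. Qed.
Lemma mk2E01 a b c d : mk2 a b c d 0 1 = b. Proof. by rewrite !mxE. Qed.
Lemma mk2E10 a b c d : mk2 a b c d 1 0 = c. Proof. by rewrite !mxE. Qed.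
Lemma mk2E11 a b c d : mk2 a b c d 1 1 = d. Proof. by rewrite !mxE. Qed.
Definition mk2E := (mk2E00, mk2E01, mk2E10, mk2E11).
Lemma cv2E0 a b : cv2 a b 0 0 = a. Proof. by rewrite !mxE. Qed.
Lemma cv2E1 a b : cv2 a b 1 0 = b. Proof. by rewrite !mxE. Qed.
Definition cv2E := (cv2E0, cv2E1).

Definition intv (x : 'cV[K]_2) := forall i, nu (x i 0) <= 1.

Lemma intv_mul (T : 'M[K]_2) x : mnorm T <= 1 -> intv x -> intv (T *m x).
Proof.
move=> HT Hx i; rewrite mulv2E; apply: nuD_le; rewrite nuM;
  apply: mulr_ile1; rewrite ?nu_ge0 ?Hx //; apply: le_trans (mnorm_ge _ _ _) HT.
Qed.

Lemma latt_T (A T T' : 'M[K]_2) : mnorm T <= 1 -> mnorm T' <= 1 -> T *m T' = 1%:M ->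
  forall v, lattice nu (A *m T) v <-> lattice nu A v.
Proof.
move=> HT HT' TT v; split.
  by case=> x [Hx ->]; exists (T *m x); split; [exact: intv_mul | rewrite mulmxA].
case=> x [Hx ->]; exists (T' *m x); split; first exact: intv_mul.
by rewrite mulmxA -(mulmxA A) TT mulmx1.
Qed.

Lemma latt_scale (A : 'M[K]_2) c v : scale_set c (lattice nu A) v <-> lattice nu (c *: A) v.
Proof.
split.
  by case=> w [[x [Hx ->]] ->]; exists x; split => //; rewrite scalemxAl.
by case=> x [Hx ->]; exists (A *m x); split; [exists x | rewrite scalemxAl].
Qed.

Lemma latt_diag (M : 'M[K]_2) a b v : M \in unitmx -> a != 0 -> b != 0 ->
  lattice nu (M *m mk2 a 0 0 b) v <->
  nu ((invmx M *m v) 0 0) <= nu a /\ nu ((invmx M *m v) 1 0) <= nu b.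
Proof.
move=> Mu a0 b0; split.
  case=> x [Hx ->]; rewrite -mulmxA mulKmx // !mulv2E !mk2E !mul0r ?addr0 ?add0r !nuM.
  by split; rewrite -[X in _ <= X]mulr1 ler_wpM2l ?nu_ge0.
move=> [h0 h1]; set y := invmx M *m v in h0 h1.
exists (cv2 (y 0 0 / a) (y 1 0 / b)); split.
  move=> i; case: (ord2P i) => ->; rewrite ?cv2E nuM nuV //.
    have ap : 0 < nu a by rewrite lt_neqAle nu_ge0 andbT eq_sym; apply/eqP => /nu_eq0 /eqP; rewrite (negbTE a0).
    by rewrite ler_pdivrMr // mul1r.
  have bp : 0 < nu b by rewrite lt_neqAle nu_ge0 andbT eq_sym; apply/eqP => /nu_eq0 /eqP; rewrite (negbTE b0).
  by rewrite ler_pdivrMr // mul1r.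
rewrite -mulmxA; have -> : mk2 a 0 0 b *m cv2 (y 0 0 / a) (y 1 0 / b) = y.
  apply: cv2P; rewrite !mulv2E !mk2E !cv2E !mul0r ?addr0 ?add0r mulrC mulfVK //.
by rewrite /y mulKVmx.
Qed.

Section Ray.
Variable pi : K.
Hypothesis hpi : uniformizer nu pi.
Variable u : 'cV[K]_2.
Hypothesis hu : u != 0.

Lemma q_pos : 0 < nu pi. Proof. by case: hpi => /andP []. Qed.
Lemma q_lt1 : nu pi < 1. Proof. by case: hpi => /andP []. Qed.
Lemma q_le1 : nu pi <= 1. Proof. exact: ltW q_lt1. Qed.
Lemma nu_pos x : x != 0 -> 0 < nu x.
Proof.
move=> x0; rewrite lt_neqAle nu_ge0 andbT eq_sym; apply/eqP => /nu_eq0 /eqP.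
by rewrite (negbTE x0).
Qed.
Lemma pi_neq0 : pi != 0.
Proof. apply/eqP => p0; have := q_pos; by rewrite p0 nu0 ltxx. Qed.
Lemma piX_neq0 n : pi ^+ n != 0. Proof. by rewrite expf_neq0 // pi_neq0. Qed.
Lemma nuX x n : nu (x ^+ n) = nu x ^+ n.
Proof. elim: n => [|n IH]; by rewrite ?expr0 ?nu1 // !exprS nuM IH. Qed.
Lemma qX_pos n : 0 < nu pi ^+ n. Proof. by rewrite exprn_gt0 // q_pos. Qed.
Lemma qX_lt n : nu pi ^+ n.+1 < nu pi ^+ n.
Proof. by rewrite exprS -[X in _ < X]mul1r ltr_pM2r ?qX_pos // q_lt1. Qed.
Lemma qX_le m n : (n <= m)%N -> nu pi ^+ m <= nu pi ^+ n.
Proof. by move=> h; apply: ler_wiXn2l; rewrite ?nu_ge0 ?q_le1. Qed.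

Definition Mu := if u 0 0 == 0 then mk2 (u 0 0) 1 (u 1 0) 0 else mk2 (u 0 0) 0 (u 1 0) 1.
Lemma Mu_unit : Mu \in unitmx.
Proof.
rewrite unitmxE unitfE det2 /Mu; case: (eqVneq (u 0 0) 0) => h0; rewrite !mk2E.
  rewrite h0 mul0r sub0r mul1r oppr_eq0; apply/negP => /eqP h1.
  by move: hu; rewrite (_ : u = 0) ?eqxx //; apply: cv2P; rewrite mxE.
by rewrite mul0r mulr1 subr0.
Qed.
Lemma Mu_e1 : Mu *m cv2 1 0 = u.
Proof.
apply: cv2P; rewrite mulv2E /Mu; case: (eqVneq (u 0 0) 0) => h0;
  by rewrite !mk2E !cv2E mulr1 mulr0 addr0.
Qed.
Lemma Mu_inv_u : invmx Mu *m u = cv2 1 0.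
Proof. by rewrite -Mu_e1 mulKmx // Mu_unit. Qed.

Definition rr n := Mu *m mk2 1 0 0 (pi ^+ n).
Definition yc (v : 'cV[K]_2) := invmx Mu *m v.

Lemma scale_mk2 c a b d e : c *: mk2 a b d e = mk2 (c * a) (c * b) (c * d) (c * e).
Proof. by apply: mx2P; rewrite !mxE. Qed.

Lemma scale_rr c n v : c != 0 -> (scale_set c (lattice nu (rr n)) v <->
  nu (yc v 0 0) <= nu c /\ nu (yc v 1 0) <= nu c * nu pi ^+ n).
Proof.
move=> c0; rewrite latt_scale /rr scalemxAr scale_mk2 mulr1 !mulr0 latt_diag ?Mu_unit //.
  by rewrite nuM nuX.
by rewrite mulf_neq0 ?piX_neq0.
Qed.
Lemma latt_rr n v : lattice nu (rr n) v <->
  nu (yc v 0 0) <= 1 /\ nu (yc v 1 0) <= nu pi ^+ n.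
Proof.
have E : lattice nu (rr n) v <-> scale_set 1 (lattice nu (rr n)) v.
  split; first by move=> h; exists v; rewrite scale1r.
  by case=> w [h ->]; rewrite scale1r.
by rewrite E scale_rr ?oner_eq0 // nu1 mul1r.
Qed.
Lemma yc_mk a b : yc (Mu *m cv2 a b) = cv2 a b.
Proof. by rewrite /yc mulKmx // Mu_unit. Qed.

Lemma ray_rr : ray nu rr.
Proof.
move=> n; split.
- rewrite /vertex /rr unitmx_mul Mu_unit /= unitmxE unitfE det2 !mk2E mulr0 subr0 mul1r.
  exact: piX_neq0.
- exists pi, 1; split => //; first exact: oner_neq0.
  + split.
      move=> v; rewrite scale_rr ?pi_neq0 // scale_rr ?oner_eq0 // nu1 mul1r.
      move=> [h0 h1]; split; first by apply: le_trans h0 q_le1.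
      by rewrite exprS.
    exists (Mu *m cv2 1 0); rewrite scale_rr ?oner_eq0 // scale_rr ?pi_neq0 // yc_mk !cv2E nu1 nu0.
    split; first by rewrite mul1r exprn_ge0 ?nu_ge0 // lexx.
    by case; rewrite leNgt q_lt1.
  + split.
      move=> v; rewrite scale_rr ?oner_eq0 // latt_rr nu1 mul1r.
      move=> [h0 h1]; split => //; apply: le_trans h1 _; exact: ltW (qX_lt n).
    exists (Mu *m cv2 0 (pi ^+ n)); rewrite scale_rr ?oner_eq0 // latt_rr yc_mk !cv2E nu0 nuX.
    split; first by rewrite ler01 lexx.
    by case=> _; rewrite nu1 mul1r leNgt qX_lt.
- case=> c c0 H.
  have h1 := proj1 (H (Mu *m cv2 1 0)).
  rewrite latt_rr scale_rr // yc_mk !cv2E nu1 nu0 in h1.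
  have [c1 _] := h1 (conj (lexx _) (ltW (qX_pos _))).
  have h2 := proj2 (H (Mu *m cv2 c 0)).
  rewrite latt_rr scale_rr // yc_mk !cv2E nu0 in h2.
  have [c2 _] := h2 (conj (lexx _) (mulr_ge0 (nu_ge0 _) (ltW (qX_pos _)))).
  have nc : nu c = 1 by apply/le_anti; rewrite c1 c2.
  have h3 := proj2 (H (Mu *m cv2 0 (c * pi ^+ n))).
  rewrite latt_rr scale_rr // yc_mk !cv2E nu0 nuM nuX nc mul1r in h3.
  have [_ h4] := h3 (conj ler01 (lexx _)).
  have := le_lt_trans h4 (lt_trans (qX_lt n.+1) (qX_lt n)).
  by rewrite ltxx.
Qed.

Hypothesis Hdisc : forall x, x != 0 -> exists j : int, nu x = nu pi ^ j.

Lemma stab_end (G : 'M[K]_2 -> Prop) : (forall a, G a -> \det a = 1) ->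
  (forall a, G a -> exists l, a *m u = l *: u) -> stabilises_end nu G.
Proof.
move=> Hdet Hfix; exists rr; first exact: ray_rr.
move=> a Ga.
have [l Hl] := Hfix a Ga.
have Mun := Mu_unit.
set B := invmx Mu *m a *m Mu.
have aM : a *m Mu = Mu *m B by rewrite /B mulmxA mulKVmx.
have B10 : B 1 0 = 0.
  have : B *m cv2 1 0 = l *: cv2 1 0.
    by rewrite /B -mulmxA Mu_e1 -mulmxA Hl -scalemxAr Mu_inv_u.
  move/(congr1 (fun v : 'cV[K]_2 => v 1 0)).
  by rewrite mulv2E !cv2E mulr1 mulr0 addr0 [RHS]mxE cv2E mulr0.
have detB : B 0 0 * B 1 1 = 1.
  have dM : \det Mu != 0 by rewrite -unitfE -unitmxE.
  have : \det B = 1.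
    by rewrite /B !det_mulmx det_inv (Hdet a Ga) mulr1 mulVf.
  by rewrite det2 B10 mulr0 subr0.
clearbody B.
have lam0 : (B 0 0) != 0 by apply/eqP => h; move: detB; rewrite h mul0r => /eqP; rewrite eq_sym oner_eq0.
have muE : (B 1 1) = (B 0 0)^-1 by apply: (mulfI lam0); rewrite detB mulfV.
have [m0 Hm0] : exists m0, nu ((B 0 1) * (B 0 0)) * nu pi ^+ m0 <= 1.
  case: (eqVneq ((B 0 1) * (B 0 0)) 0) => h; first by exists 0%N; rewrite h nu0 mul0r ler01.
  have np := nu_pos h.
  have ip : 0 < (nu ((B 0 1) * (B 0 0)))^-1 by rewrite invr_gt0.
  have [m0 Hm] := geom_small (nu_ge0 pi) q_lt1 ip.
  exists m0; rewrite -(ler_pM2l ip) mulr1 mulrA mulVf ?mul1r ?ltW //; exact: lt0r_neq0.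
have key : forall k m, (m0 <= m)%N -> nu ((B 0 0) ^+ 2 * pi ^+ m / pi ^+ k) = 1 ->
    forall n, same_vertex nu (act_ray a rr (n + k)) (rr (n + m)).
  move=> k m mm0 hs n.
  set s := (B 0 0) ^+ 2 * pi ^+ m / pi ^+ k in hs.
  set t := - ((B 0 1) * (B 0 0)) * pi ^+ (n + m).
  have s0 : s != 0 by apply/eqP => h; move: hs; rewrite h nu0 => /eqP; rewrite eq_sym oner_eq0.
  have ht : nu t <= 1.
    rewrite /t nuM nuN nuX; apply: le_trans Hm0.
    by rewrite ler_wpM2l ?nu_ge0 // qX_le // (leq_trans mm0) // leq_addl.
  exists (B 0 0)^-1; first by rewrite invr_eq0.
  move=> v; rewrite latt_scale.
  have inner : mk2 1 0 0 (pi ^+ (n + m)) =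
      B *m mk2 1 0 0 (pi ^+ (n + k)) *m mk2 ((B 0 0)^-1 * 1) ((B 0 0)^-1 * t) ((B 0 0)^-1 * 0) ((B 0 0)^-1 * s).
    apply: mx2P; rewrite !mul2E !mk2E ?B10 ?muE /s /t !exprD;
      by field; rewrite ?lam0 ?piX_neq0.
  have E : rr (n + m) = ((B 0 0)^-1 *: act_ray a rr (n + k)) *m mk2 1 t 0 s.
    rewrite /rr inner -scale_mk2 -!scalemxAr -scalemxAl; congr (_ *: _).
    by rewrite /act_ray /rr !mulmxA aM.
  rewrite E; apply: (@latt_T _ _ (mk2 1 (- t / s) 0 s^-1)).
  - apply: mnorm_le => i j; case: (ord2P i) => ->; case: (ord2P j) => ->;
      rewrite !mk2E ?nu1 ?nu0 ?hs ?ler01 //.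
  - apply: mnorm_le => i j; case: (ord2P i) => ->; case: (ord2P j) => ->;
      rewrite !mk2E ?nu1 ?nu0 ?ler01 ?nuV // ?hs ?invr1 //.
    by rewrite nuM nuN nuV // hs invr1 mulr1.
  - by apply: mx2P; rewrite !mul2E !mk2E !mxE /=; field; rewrite ?s0.
have qn n : nu pi ^+ n != 0 by rewrite expf_neq0 // lt0r_neq0 // q_pos.
case: (Hdisc lam0) => [[j|j]] Hj.
- have Hj' : nu (B 0 0) = nu pi ^+ j by exact: Hj.
  exists (m0 + j * 2)%N, m0; apply: key => //.
  rewrite !nuM nuV ?piX_neq0 // !nuX Hj' muln2 -addnn !exprD.
  by field; rewrite ?qn.
- have Hj' : nu (B 0 0) = (nu pi ^+ j.+1)^-1 by exact: Hj.
  exists m0, (m0 + j.+1 * 2)%N; apply: key; first exact: leq_addr.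
  rewrite !nuM nuV ?piX_neq0 // !nuX Hj' muln2 -addnn !exprD.
  by field; rewrite ?qn.
Qed.
End Ray.
End S.

Theorem proposition1p3 (R : realType) (K : fieldType) (nu : K -> R)
  (HK : nonarch_local_field nu) (G : mat K -> Prop)
  (HG : is_subgroup_SL2 G) (Hne : ~ elementary nu G) :
  discrete_subgroup nu G <->
  (forall a b, G a -> G b -> discrete_subgroup nu (gen2 a b)).
Proof.
case: HK => Hu [pi [hpi Hdisc]] _ Hres.
split.
  move=> HD a b Ga Gb g Gg.
  have [e e0 He] := HD g (Gg G HG Ga Gb).
  exists e => // h Hh Hc; apply: He => //; exact: Hh G HG Ga Gb.
move=> H2.
have [n [n0 n1]] := residue_char Hu Hres.
case: (eqVneq (n%:R : K) 0) => nz.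
  have [p hp] := natf0_pchar n0 (introT eqP nz).
  apply: (disc_from1 Hu HG); apply: NNPP => nd.
  have [u un Hfix] := fixline Hu hp HG H2 nd.
  apply: Hne; right; left.
  by apply: (stab_end Hu hpi un Hdisc); case: HG.
apply: (case1_disc Hu HG H2 _ n1).
by apply: nu_pos.
Qed.
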